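(* For every $\omega\in(0,\infty)$, the pair $(G_c,g(0))$ is observable, where $g$ is the solution of the boundary value problem described in the context.
   Context: Let $a\in\mathbb{R}$, $\tau>0$, $G_c=\begin{bmatrix}0&\omega\\-\omega&0\end{bmatrix}$, $E$ the $2\times2$ identity, $\gamma_c=[1,0]$, $\phi_0\equiv1$, $\phi_n(x)=\sqrt2\cos(n\pi x)$ ($n\ge1$), $\mathcal L(x)=\sum_{n=0}^N\ell_n\phi_n(x)$, where for some $\delta>0$, $N\in\mathbb{N}$ satisfies $a-(n\pi)^2<-\delta$ for $n>N$ and $L=[\ell_0\ \ldots\ \ell_N]^\top$ is chosen so that a positive-definite $Q$ satisfies $Q(A+LC)+(A+LC)^\top Q<-2\delta Q$, with $A=\mathrm{diag}(a-(n\pi)^2)_{n=0}^N$, $C=[1\ \sqrt2\ \ldots\ \sqrt2]$. $g\in H^2((0,1);\mathbb{R}^{1\times2})$ is the solution of $g''(x)=g(x)(G_c-aE)-\mathcal L(x)g(0)$, $g'(0)=0$, $g'(1)=-\gamma_ce^{-G_c\tau}$. Observability of a pair $(M,c)$ with $M\in\mathbb{R}^{2\times2}$, $c\in\mathbb{R}^{1\times2}$ means the matrix with rows $c$, $cM$ has rank 2. *)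

(* Defs.v *)
From HB Require Import structures.
From mathcomp Require Import all_boot all_order all_algebra.
From mathcomp Require Import all_classical all_reals all_analysis.
Set Implicit Arguments. Unset Strict Implicit. Unset Printing Implicit Defensive.
Import Order.TTheory GRing.Theory Num.Theory.
Import numFieldNormedType.Exports.
Local Open Scope ring_scope.

Definition expm (R : realType) (n : nat) (M : 'M[R]_n.+1) : 'M[R]_n.+1 :=
  limn (fun m => \sum_(k < m) ((k`!)%:R^-1 *: M ^+ k)).

Definition Gc (R : realType) (omega : R) : 'M[R]_2 :=
  \matrix_(i < 2, j < 2)
    (if (i == 0) && (j == 1) then omega
     else if (i == 1) && (j == 0) then - omega else 0).

Definition gammac (R : realType) : 'rV[R]_2 := \row_(j < 2) (if j == 0 then 1 else 0).

Definition phi (R : realType) (n : nat) (x : R) : R :=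
  if n == 0%N then 1 else Num.sqrt 2 * cos (n%:R * pi * x).

Definition calL (R : realType) (N : nat) (L : 'cV[R]_N.+1) (x : R) : R :=
  \sum_(n < N.+1) L n 0 * phi n x.

Definition Amat (R : realType) (N : nat) (a : R) : 'M[R]_N.+1 :=
  diag_mx (\row_(n < N.+1) (a - (n%:R * pi) ^+ 2)).

Definition Cmat (R : realType) (N : nat) : 'rV[R]_N.+1 :=
  \row_(n < N.+1) (if n == ord0 then 1 else Num.sqrt 2).

Definition posdef (R : realType) (n : nat) (M : 'M[R]_n) : Prop :=
  M^T = M /\ forall v : 'cV[R]_n, v != 0 -> 0 < (v^T *m M *m v) 0 0.

Definition observable (R : realType) (M : 'M[R]_2) (c : 'rV[R]_2) : Prop :=
  \rank (col_mx c (c *m M)) = 2%N.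

(* Main.v *)
Require Import Defs.
From HB Require Import structures.
From mathcomp Require Import all_boot all_order all_algebra.
From mathcomp Require Import all_classical all_reals all_analysis.
From mathcomp Require Import ring lra.
Import Order.TTheory GRing.Theory Num.Theory.
Import numFieldNormedType.Exports.
Local Open Scope ring_scope.
Local Open Scope classical_set_scope.
Lemma det2 (R : comRingType) (A : 'M[R]_2) :
  \det A = A 0 0 * A 1 1 - A 0 1 * A 1 0.
Proof.
rewrite (expand_det_row _ ord0) big_ord_recl big_ord1 /cofactor !det_mx11.
rewrite !mxE /= expr0 expr1 mul1r mulN1r mulrN.
congr (_ * _ - _ * _); congr (A _ _); exact: val_inj.
Qed.

Lemma obs_of_neq0 (R : realType) (omega : R) (c : 'rV[R]_2) :
  0 < omega -> c != 0 -> observable (Gc omega) c.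
Proof.
move=> om cn0; rewrite /observable.
apply: mxrank_unit; rewrite unitmxE unitfE det2.
have e0 j : col_mx c (c *m Gc omega) 0 j = c 0 j.
  have -> : (0 : 'I_2) = lshift 1 (ord0 : 'I_1) by apply: val_inj.
  by rewrite col_mxEu.
have e1 j : col_mx c (c *m Gc omega) 1 j = (c *m Gc omega) 0 j.
  have -> : (1 : 'I_2) = rshift 1 (ord0 : 'I_1) by apply: val_inj.
  by rewrite col_mxEd.
rewrite !e0 !e1 !mxE !big_ord_recl !big_ord0 !mxE /=.
have -> : lift ord0 ord0 = 1 :> 'I_2 by apply: val_inj.
have : c 0 0 != 0 \/ c 0 1 != 0.
  apply/orP; apply: contraNT cn0; rewrite negb_or !negbK => /andP[/eqP h0 /eqP h1].
  apply/eqP/rowP => j; rewrite mxE; case: j => [[|[|]]] //= ?.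
    by rewrite -h0; congr (c _ _); exact: val_inj.
  by rewrite -h1; congr (c _ _); exact: val_inj.
move=> h; rewrite !mulr0 !addr0 !add0r mulrN mulrN opprK !mulrA -mulrDl.
apply: mulf_neq0; last exact: lt0r_neq0.
rewrite -!expr2 paddr_eq0 ?sqr_ge0 // !sqrf_eq0 negb_and.
by case: h => ->; rewrite ?orbT.
Qed.

Section E.
Variable R : realType.
Definition Jm : 'M[R]_2 := \matrix_(i < 2, j < 2)
    (if (i == 0) && (j == 1) then -1
     else if (i == 1) && (j == 0) then 1 else 0).
Definition cc (k : nat) : R := (~~ odd k)%:R * (-1) ^+ k./2.
Definition ss (k : nat) : R := (odd k)%:R * (-1) ^+ k.-1./2.

Lemma ccS k : cc k.+1 = - ss k.
Proof.
rewrite /cc /ss -[k]odd_double_half; case: (odd k); move: (k./2) => j /=.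
  by rewrite !add0n doubleK exprS odd_double /= !mul1r mulN1r.
by rewrite (_ : (false + j.*2 = j.*2)%N) // odd_double /= !mul0r oppr0.
Qed.
Lemma ssS k : ss k.+1 = cc k.
Proof. by rewrite /cc /ss /=. Qed.

Lemma JJ : Jm * Jm = -1.
Proof.
apply/matrixP => i j; rewrite !mxE !big_ord_recl big_ord0 !mxE.
by case: i => [[|[|]]] //= ?; case: j => [[|[|]]] //= ?; rewrite /=; 
  rewrite ?(mulr0, mul0r, addr0, add0r, mulr1, mul1r, mulN1r, oppr0, opprK).
Qed.

Lemma Jpow k : Jm ^+ k = cc k *: 1 + ss k *: Jm.
Proof.
elim: k => [|k IH].
  by rewrite expr0 /cc /ss /= expr0 mul1r mul0r scale0r addr0 scale1r.
rewrite (exprSr Jm k) IH mulrDl -!scalerAl mul1r JJ ccS ssS scalerN.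
by rewrite scaleNr addrC.
Qed.

Lemma termE (th : R) k :
  (k`!%:R)^-1 *: (th *: Jm) ^+ k = cos_coeff th k *: 1 + sin_coeff th k *: Jm.
Proof.
rewrite exprZn Jpow scalerDr !scalerA /cos_coeff /sin_coeff /cc /ss /=.
rewrite scalerDr !scalerA -exprnP.
by congr (_ *: _ + _ *: _); ring.
Qed.

Lemma hM (omega tau : R) : - (Gc omega * tau%:M) = (omega * tau) *: Jm.
Proof.
apply/matrixP => i j; rewrite [Gc omega * _]mul_mx_scalar !mxE.
by case: i => [[|[|]]] //= ?; case: j => [[|[|]]] //= ?;
  rewrite ?(mulr0, mul0r, oppr0, mulrN, mulN1r, mulr1, opprK) // mulrC.
Qed.

Lemma expmE (omega tau : R) :
  expm (- (Gc omega * tau%:M)) = cos (omega * tau) *: 1 + sin (omega * tau) *: Jm.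
Proof.
rewrite /expm hM; set th := omega * tau.
have -> : (fun m => \sum_(k < m) ((k`!)%:R^-1 *: (th *: Jm) ^+ k)) =
   (fun m => series (cos_coeff th) m *: 1 + series (sin_coeff th) m *: Jm).
  apply/funext => m; under eq_bigr do rewrite termE.
  by rewrite big_split /= -!scaler_suml /series /= !big_mkord.
apply: cvg_lim => //.
apply: cvgD; apply: cvgZ; try exact: cvg_cst.
  by rewrite cos.unlock; exact: is_cvg_series_cos_coeff.
by rewrite sin.unlock; exact: is_cvg_series_sin_coeff.
Qed.

Lemma row0_neq0 (omega tau : R) :
  gammac R *m expm (- (Gc omega * tau%:M)) != 0.
Proof.
rewrite expmE; set th := omega * tau.
apply/negP => /eqP /rowP h.
have h0 := h 0; have h1 := h 1.
rewrite !mxE !big_ord_recl !big_ord0 !mxE /= in h0 h1.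
rewrite !(mul1r, mul0r, mulr0, mulr1, addr0, add0r, mulrN1) in h0 h1.
move/eqP: h1; rewrite oppr_eq0 => /eqP h1.
by have := cos2Dsin2 th; rewrite h0 h1 expr0n /= addr0 => /eqP; rewrite eq_sym oner_eq0.
Qed.
End E.

Lemma coord_is_derive (R : realType) (F : R -> 'rV[R]_2) x j :
  derivable F x 1 -> is_derive x 1 (fun y => F y 0 j) (derive1 F x 0 j).
Proof.
move=> dF.
have hc : (fun h : R => h^-1 *: (((fun y => F y 0 j) \o shift x) (h *: 1) - F x 0 j))
   @ 0^' --> derive1 F x 0 j.
  rewrite derive1E /derive.
  have -> : (fun h : R => h^-1 *: (((fun y => F y 0 j) \o shift x) (h *: 1) - F x 0 j))
    = (fun M : 'rV[R]_2 => M 0 j) \o (fun h : R => h^-1 *: ((F \o shift x) (h *: 1) - F x)).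
    by apply/funext => h /=; rewrite !mxE.
  apply: continuous_cvg; first exact: coord_continuous.
  exact: dF.
apply: DeriveDef; first by apply/cvg_ex; eexists; exact: hc.
by rewrite /derive; exact: cvg_lim hc.
Qed.

Lemma mvt_bound (R : realType) (f df : R -> R) (s t B : R) :
  s <= t -> (forall x, x \in `]s, t[%R -> is_derive x 1 f (df x)) ->
  {within `[s, t], continuous f} ->
  (forall x, x \in `[s, t]%R -> `|df x| <= B) -> `|f t - f s| <= B * (t - s).
Proof.
move=> st fd fc hB.
have [c cst ->] := MVT_segment st fd fc.
rewrite normrM (ger0_norm (_ : 0 <= t - s)) ?subr_ge0 //.
by apply: ler_wpM2r; [rewrite subr_ge0 | exact: hB].
Qed.

Lemma sub01 (R : realType) (s t : R) : 0 <= s -> t <= 1 ->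
  `[s, t] `<=` `[0, 1].
Proof.
move=> s0 t1 x /=; rewrite /= ?inE /= ?in_itv /= => /andP[a b].
by apply/andP; split; [exact: le_trans a| exact: le_trans t1].
Qed.

Lemma within_abs (R : realType) (f : R -> R) (A : set R) :
  {within A, continuous f} -> {within A, continuous (fun x => `|f x|)}.
Proof. by move=> cf x; apply: cvg_norm; exact: cf. Qed.

Lemma within_add (R : realType) (f g : R -> R) (A : set R) :
  {within A, continuous f} -> {within A, continuous g} ->
  {within A, continuous (f + g)}.
Proof. by move=> cf cg x; apply: cvgD; [exact: cf | exact: cg]. Qed.

Lemma uniq_ode (R : realType) (K : R) (u0 u1 p0 p1 q0 q1 : R -> R) :
  0 <= K ->
  (forall x : R, is_derive x 1 u0 (p0 x)) -> (forall x : R, is_derive x 1 u1 (p1 x)) ->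
  {within `[0, 1], continuous p0} -> {within `[0, 1], continuous p1} ->
  (forall x : R, 0 < x < 1 -> is_derive x 1 p0 (q0 x)) ->
  (forall x : R, 0 < x < 1 -> is_derive x 1 p1 (q1 x)) ->
  (forall x, `|q0 x| <= K * (`|u0 x| + `|u1 x|)) ->
  (forall x, `|q1 x| <= K * (`|u0 x| + `|u1 x|)) ->
  u0 0 = 0 -> u1 0 = 0 -> p0 0 = 0 -> p1 0 = 0 ->
  p0 1 = 0 /\ p1 1 = 0.
Proof.
move=> K0 du0 du1 cp0 cp1 dp0 dp1 qb0 qb1 u00 u10 p00 p10.
pose V := (fun x => `|u0 x|) + (fun x => `|u1 x|) + (fun x => `|p0 x|) + (fun x => `|p1 x|).
have VE x : V x = `|u0 x| + `|u1 x| + `|p0 x| + `|p1 x| by [].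
have V0 x : 0 <= V x by rewrite VE !addr_ge0.
have cu (f df : R -> R) s t : (forall x : R, is_derive x 1 f (df x)) ->
    {within `[s, t], continuous f}.
  move=> hd; apply: derivable_within_continuous => x _.
  by have [] := hd x.
pose n := (Num.truncn (4 * (1 + K))).+1.
pose h := (n%:R : R)^-1.
have hn : 4 * (1 + K) < n%:R by exact: truncnS_gt.
have n0 : (0 : R) < n%:R by rewrite ltr0n.
have h0 : 0 < h by rewrite invr_gt0.
have hnE : h * n%:R = 1 by rewrite mulVf // gt_eqF.
have ha : 2 * h * (1 + K) < 1 by nra.
have loc (s t : R) : 0 <= s -> s < t -> t <= 1 -> t - s <= h -> V s = 0 -> V t = 0.
  move=> s0 st t1 tsh Vs.
  have zs : u0 s = 0 /\ u1 s = 0 /\ p0 s = 0 /\ p1 s = 0.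
    rewrite VE in Vs.
    have a0 := normr_ge0 (u0 s); have a1 := normr_ge0 (u1 s).
    have a2 := normr_ge0 (p0 s); have a3 := normr_ge0 (p1 s).
    split; [|split; [|split]]; apply/normr0_eq0; lra.
  case: zs => zu0 [zu1 [zp0 zp1]].
  have cV : {within `[s, t], continuous V}.
    apply: within_add; [apply: within_add; [apply: within_add|]|];
      apply: within_abs.
    - exact: cu du0.
    - exact: cu du1.
    - exact: continuous_subspaceW (@sub01 R s t s0 t1) cp0.
    - exact: continuous_subspaceW (@sub01 R s t s0 t1) cp1.
  have [c cst cmax] := EVT_max (ltW st) cV.
  have inS x y : x \in `[s, y]%R -> y \in `[s, t]%R -> x \in `[s, t]%R.
    rewrite !in_itv /= => /andP[a b] /andP[_ d].
    by rewrite a (le_trans b d).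
  have bu (f df : R -> R) : (forall x : R, is_derive x 1 f (df x)) -> f s = 0 ->
      (forall x, x \in `[s, t]%R -> `|df x| <= V c) ->
      forall y, y \in `[s, t]%R -> `|f y| <= V c * (y - s).
    move=> fd fs hb y ys; have -> : f y = f y - f s by rewrite fs subr0.
    have sy : s <= y by move: ys; rewrite in_itv /= => /andP[].
    have hd : forall x, x \in `]s, y[%R -> is_derive x 1 f (df x) by move=> x _.
    have hb' : forall x, x \in `[s, y]%R -> `|df x| <= V c.
      by move=> x xs; apply: hb; exact: inS xs ys.
    exact: (@mvt_bound R f df s y (V c) sy hd (cu _ _ s y fd) hb').
  have bp (f df : R -> R) : {within `[0, 1], continuous f} ->
      (forall x : R, 0 < x < 1 -> is_derive x 1 f (df x)) -> f s = 0 ->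
      (forall x, x \in `[s, t]%R -> `|df x| <= K * V c) ->
      forall y, y \in `[s, t]%R -> `|f y| <= K * V c * (y - s).
    move=> fc fd fs hb y ys; have -> : f y = f y - f s by rewrite fs subr0.
    move: (ys); rewrite in_itv /= => /andP[sy yt].
    have hd : forall x, x \in `]s, y[%R -> is_derive x 1 f (df x).
      move=> x; rewrite in_itv /= => /andP[a b]; apply: fd.
      by rewrite (le_lt_trans s0 a) (lt_le_trans b (le_trans yt t1)).
    have hc : {within `[s, y], continuous f}.
      exact: continuous_subspaceW (@sub01 R s y s0 (le_trans yt t1)) fc.
    have hb' : forall x, x \in `[s, y]%R -> `|df x| <= K * V c.
      by move=> x xs; apply: hb; exact: inS xs ys.
    exact: (@mvt_bound R f df s y _ sy hd hc hb').
  have hV x : x \in `[s, t]%R -> `|u0 x| + `|u1 x| <= V c.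
    move=> xs; apply: le_trans (cmax x xs); rewrite VE.
    have := normr_ge0 (p0 x); have := normr_ge0 (p1 x); lra.
  have hV0 x : x \in `[s, t]%R -> `|p0 x| <= V c.
    move=> xs; apply: le_trans (cmax x xs); rewrite VE.
    have := normr_ge0 (u0 x); have := normr_ge0 (u1 x); have := normr_ge0 (p1 x); lra.
  have hV1 x : x \in `[s, t]%R -> `|p1 x| <= V c.
    move=> xs; apply: le_trans (cmax x xs); rewrite VE.
    have := normr_ge0 (u0 x); have := normr_ge0 (u1 x); have := normr_ge0 (p0 x); lra.
  have hq (f : R -> R) : (forall x, `|f x| <= K * (`|u0 x| + `|u1 x|)) ->
      forall x, x \in `[s, t]%R -> `|f x| <= K * V c.
    by move=> hf x xs; apply: le_trans (hf x) _; apply: ler_wpM2l => //; exact: hV.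
  have e1 := bu _ _ du0 zu0 hV0 c cst.
  have e2 := bu _ _ du1 zu1 hV1 c cst.
  have e3 := bp _ _ cp0 dp0 zp0 (hq _ qb0) c cst.
  have e4 := bp _ _ cp1 dp1 zp1 (hq _ qb1) c cst.
  move: (cst); rewrite in_itv /= => /andP[sc ct].
  have Vc0 := V0 c.
  have d1 : V c * (c - s) <= V c * h.
    by apply: ler_wpM2l => //; lra.
  have d2 : K * V c * (c - s) <= K * V c * h.
    by apply: ler_wpM2l; [exact: mulr_ge0 | lra].
  have Vcle : V c <= V c * (2 * h * (1 + K)).
    have := VE c; lra.
  have Vc00 : V c <= 0 by nra.
  have tin : t \in `[s, t]%R by rewrite in_itv /= (ltW st) lexx.
  by apply/eqP; rewrite eq_le V0 andbT (le_trans (cmax t tin) Vc00).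
have P k : forall t, 0 <= t -> t <= 1 -> t <= k%:R * h -> V t = 0.
  elim: k => [|k IH] t t0 t1 tk.
    have -> : t = 0 by apply/eqP; rewrite eq_le t0 andbT; rewrite mul0r in tk.
    by rewrite VE u00 u10 p00 p10 normr0 !addr0.
  have [tk'|tk'] := leP t (k%:R * h); first exact: IH.
  have s0 : 0 <= k%:R * h by rewrite mulr_ge0 // ltW.
  apply: (loc (k%:R * h)) => //.
  - by rewrite -natr1 mulrDl mul1r in tk; lra.
  - by apply: IH => //; lra.
have := P n 1 ler01 (lexx _); rewrite mulrC hnE lexx => /(_ isT).
rewrite VE => V1.
have a0 := normr_ge0 (u0 1); have a1 := normr_ge0 (u1 1).
have a2 := normr_ge0 (p0 1); have a3 := normr_ge0 (p1 1).
by split; apply/normr0_eq0; lra.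
Qed.

Lemma coord_within (R : realType) (F : R -> 'rV[R]_2) (A : set R) j :
  {within A, continuous F} -> {within A, continuous (fun y => F y 0 j)}.
Proof.
move=> cF x.
have -> : (fun y => F y 0 j) = (fun M : 'rV[R]_2 => M 0 j) \o F by [].
apply: continuous_cvg; [exact: coord_continuous | exact: cF].
Qed.

Theorem lemma4 (R : realType) (a tau : R) (htau : 0 < tau)
  (delta : R) (hdelta : 0 < delta) (N : nat)
  (hN : forall n : nat, (N < n)%N -> a - (n%:R * pi) ^+ 2 < - delta)
  (L : 'cV[R]_N.+1) (Q : 'M[R]_N.+1) (hQ : posdef Q)
  (hLyap : posdef (- (Q *m (Amat N a + L *m Cmat R N)
                      + (Amat N a + L *m Cmat R N)^T *m Q
                      + (2 * delta) *: Q)))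
  (omega : R) (homega : 0 < omega)
  (g : R -> 'rV[R]_2)
  (hg1 : forall x : R, derivable g x 1)
  (hg1c : {within `[0, 1], continuous (derive1 g)})
  (hg2 : forall x : R, 0 < x < 1 -> derivable (derive1 g) x 1)
  (hode : forall x : R, 0 < x < 1 ->
     derive1 (derive1 g) x
       = g x *m (Gc omega - a%:M) - calL L x *: g 0)
  (hbc0 : derive1 g 0 = 0)
  (hbc1 : derive1 g 1 = - (gammac R *m expm (- (Gc omega * tau%:M)))) :
  observable (Gc omega) (g 0).
Proof.
case: (eqVneq (g 0) 0) => [g00|gn0]; last exact: obs_of_neq0.
exfalso.
pose B := Gc omega - a%:M.
have dp (j : 'I_2) (x : R) : 0 < x < 1 ->
    is_derive x 1 (fun y => derive1 g y 0 j) ((g x *m B) 0 j).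
  move=> hx; have := @coord_is_derive R _ x j (hg2 x hx).
  by rewrite hode // g00 scaler0 subr0.
have qb (j : 'I_2) (x : R) : `|(g x *m B) 0 j| <= (`|a| + omega) * (`|g x 0 0| + `|g x 0 1|).
  rewrite !mxE !big_ord_recl big_ord0 !mxE /=.
  have -> : lift ord0 ord0 = 1 :> 'I_2 by apply: val_inj.
  have a0 := normr_ge0 a; have a1 := normr_ge0 (g x 0 0).
  have a2 := normr_ge0 (g x 0 1).
  have -> : (ord0 : 'I_2) = 0 by apply: val_inj.
  case: j => [[|[|]]] //= ?; rewrite ?mulr0n ?mulr1n ?sub0r ?subr0 addr0;
    apply: le_trans (ler_normD _ _) _;
    rewrite !normrM ?normrN (gtr0_norm homega); nra.
have K0 : 0 <= `|a| + omega by rewrite addr_ge0 // ltW.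
have z0 (j : 'I_2) : g 0 0 j = 0 by rewrite g00 mxE.
have z1 (j : 'I_2) : derive1 g 0 0 j = 0 by rewrite hbc0 mxE.
have [h0 h1] := @uniq_ode R _ _ _ _ _ _ _ K0 (fun x => @coord_is_derive R _ x 0 (hg1 x))
  (fun x => @coord_is_derive R _ x 1 (hg1 x))
  (@coord_within R _ _ 0 hg1c) (@coord_within R _ _ 1 hg1c) (dp 0) (dp 1) (qb 0) (qb 1)
  (z0 0) (z0 1) (z1 0) (z1 1).
have d1 : derive1 g 1 = 0.
  apply/rowP => j; rewrite mxE; case: j => [[|[|]]] //= ?.
    by rewrite -h0; congr (derive1 g 1 _ _); exact: val_inj.
  by rewrite -h1; congr (derive1 g 1 _ _); exact: val_inj.
move: hbc1; rewrite d1 => /eqP; rewrite eq_sym oppr_eq0.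
by apply/negP; exact: row0_neq0.
Qed.
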